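(* Let $t\in\mathbb{R}$, $q$ sufficiently large, and $0<k<1$, with all objects as in the context. Then \begin{align*} \sum_{\chi\bmod q}^{*}|L(\tfrac12+it,f\otimes\chi)|^{2k}\ll&\Big(\sum_{\chi\bmod q}^{*}|L(\tfrac12+it,f\otimes\chi)|^2\sum_{v=0}^{R}\Big(\prod_{j=1}^{v}|\mathcal{N}_j(t,\chi,k-1)|^2\Big)|\mathcal{Q}_{v+1}(t,\chi,k)|^2\Big)^{k}\\ &\times\Big(\sum_{\chi\bmod q}^{*}\sum_{v=0}^{R}\Big(\prod_{j=1}^{v}|\mathcal{N}_j(t,\chi,k)|^2\Big)|\mathcal{Q}_{v+1}(t,\chi,k)|^2\Big)^{1-k}, \end{align*} with implied constant depending only on $k$ (and $f$).
   Context: $f$ is a fixed holomorphic Hecke eigenform of even weight $\kappa$, level $1$, normalized Hecke eigenvalues $\lambda_f(n)$; $L(s,f\otimes\chi)=\sum_n\lambda_f(n)\chi(n)n^{-s}$ (entire continuation) for $\chi$ primitive mod $q$, $q\not\equiv2\pmod4$; $\sum^*_{\chi\bmod q}$ is the sum over primitive characters mod $q$. Fix $k>0$, $k\ne1$, and natural numbers $N,M$ large enough depending on $k$. Let $\ell_1=2\lceil N\log\log q\rceil$ and $\ell_{j+1}=2\lceil N\log\ell_j\rceil$ for $j\ge1$, and let $R$ be the largest natural number with $\ell_R>10^M$. Let $P_1$ be the set of odd primes $\le q^{1/\ell_1^2}$ and, for $2\le j\le R$, $P_j$ the set of primes in $(q^{1/\ell_{j-1}^2},q^{1/\ell_j^2}]$.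 Define $\mathcal{P}_j(t,\chi)=\sum_{p\in P_j}\lambda_f(p)\chi(p)p^{-1/2-it}$ and $\mathcal{Q}_j(t,\chi,k)=\big(c_k\mathcal{P}_j(t,\chi)/\ell_j\big)^{r_k\ell_j}$ for $1\le j\le R$, with $\mathcal{Q}_{R+1}(t,\chi,k)=1$, where $c_k=64\max(1,k)$, $r_k=2$ if $k>1$ and $r_k=\lceil1+1/k\rceil+1$ if $k<1$. For $\ell\ge0$, $E_\ell(x)=\sum_{j=0}^{\ell}x^j/j!$; for real $\alpha$, $\mathcal{N}_j(t,\chi,\alpha)=E_{\ell_j}(\alpha\mathcal{P}_j(t,\chi))$ and $\mathcal{N}(t,\chi,\alpha)=\prod_{j=1}^R\mathcal{N}_j(t,\chi,\alpha)$. Empty products equal $1$. *)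

(* Defs.v *)
From Stdlib Require Import Reals Lra Lia ZArith Znumtheory List ClassicalEpsilon.
From Coquelicot Require Import Coquelicot.
Import ListNotations.
Open Scope R_scope.

Definition cexp (z : C) : C :=
  (RtoC (exp (Re z)) * (RtoC (cos (Im z)) + Ci * RtoC (sin (Im z))))%C.

Definition npow_neg (n : nat) (s : C) : C := cexp (- s * RtoC (ln (INR n)))%C.

(* real power x^y for x >= 0, y > 0, with the convention 0^y = 0 *)
Definition rpow (x y : R) : R := if Req_EM_T x 0 then 0 else Rpower x y.

Definition Rceil (x : R) : Z := (- (up (- x) - 1))%Z.
Definition natceil (x : R) : nat := Z.to_nat (Rceil x).

Definition cdiff (F : C -> C) (z : C) : Prop := @ex_derive C_AbsRing C_NormedModule F z.

Definition C_series (a : nat -> C) (l : C) : Prop := @is_series C_AbsRing C_NormedModule a l.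

Definition upper (z : C) : Prop := Im z > 0.

Definition is_cusp_form_level1 (kappa : nat) (f : C -> C) (a : nat -> C) : Prop :=
  (forall z, upper z -> cdiff f z) /\
  (forall (A B Cc D : Z), (A * D - B * Cc)%Z = 1%Z ->
     forall z, upper z ->
       f ((RtoC (IZR A) * z + RtoC (IZR B)) / (RtoC (IZR Cc) * z + RtoC (IZR D)))%C
       = ((RtoC (IZR Cc) * z + RtoC (IZR D)) ^ kappa * f z)%C) /\
  a 0%nat = 0%C /\
  (forall z, upper z ->
     C_series (fun n => a n * cexp (RtoC (2 * PI * INR n) * Ci * z))%C (f z)).

(* Hecke operator T_n on weight kappa, level 1:
   (T_n f)(z) = n^{kappa-1} sum_{ad = n, d>0} sum_{0<=b<d} d^{-kappa} f((az+b)/d) *)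
Definition hecke_op (kappa : nat) (n : nat) (f : C -> C) (z : C) : C :=
  (RtoC (INR n ^ (kappa - 1)) *
   fold_right Cplus 0%C
     (map (fun d =>
        if Nat.eqb (Nat.modulo n d) 0 then
          fold_right Cplus 0%C
            (map (fun b =>
               RtoC (/ INR d ^ kappa) *
               f ((RtoC (INR (Nat.div n d)) * z + RtoC (INR b)) / RtoC (INR d)))
               (seq 0 d))
        else 0%C)
        (seq 1 n)))%C.

Definition is_normalized_hecke_eigenform (kappa : nat) (f : C -> C) (a : nat -> C) : Prop :=
  Nat.Even kappa /\ is_cusp_form_level1 kappa f a /\ a 1%nat = 1%C /\
  (forall n, (1 <= n)%nat -> forall z, upper z -> hecke_op kappa n f z = (a n * f z)%C).

Definition lam (kappa : nat) (a : nat -> C) (n : nat) : C :=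
  (a n / RtoC (sqrt (INR n) ^ (kappa - 1)))%C.

Definition is_dirichlet_char (q : nat) (chi : nat -> C) : Prop :=
  (forall n, chi (n + q)%nat = chi n) /\
  (forall m n, chi (m * n)%nat = (chi m * chi n)%C) /\
  chi 1%nat = 1%C /\
  (forall n, chi n = 0%C <-> Nat.gcd n q <> 1%nat).

(* primitive: not induced by a character of any proper modulus d | q, d < q *)
Definition is_primitive_char (q : nat) (chi : nat -> C) : Prop :=
  is_dirichlet_char q chi /\
  forall d, Nat.divide d q -> (d < q)%nat ->
    ~ (forall n, Nat.gcd n q = 1%nat -> Nat.modulo n d = Nat.modulo 1 d -> chi n = 1%C).

Definition prim_chars (q : nat) : list (nat -> C) :=
  epsilon (inhabits nil)
    (fun l => NoDup l /\ forall chi, In chi l <-> is_primitive_char q chi).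

Definition sum_prim (q : nat) (F : (nat -> C) -> R) : R :=
  fold_right Rplus 0 (map F (prim_chars q)).

Definition is_L_continuation (lf : nat -> C) (chi : nat -> C) (F : C -> C) : Prop :=
  (forall s, cdiff F s) /\
  (forall s, Re s > 2 ->
     C_series (fun n => if Nat.eqb n 0 then 0%C else (lf n * chi n * npow_neg n s)%C) (F s)).

Definition Lfun (lf : nat -> C) (chi : nat -> C) (s : C) : C :=
  epsilon (inhabits (fun _ => 0%C)) (is_L_continuation lf chi) s.

Fixpoint ell (N q j : nat) : nat :=
  match j with
  | O => O
  | S O => (2 * natceil (INR N * ln (ln (INR q))))%nat
  | S j' => (2 * natceil (INR N * ln (INR (ell N q j'))))%nat
  end.

Definition Rmax_idx (N M q : nat) : nat :=
  epsilon (inhabits 0%nat)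
    (fun R => (1 <= R)%nat /\ (ell N q R > 10 ^ M)%nat /\
       forall j, (1 <= j)%nat -> (ell N q j > 10 ^ M)%nat -> (j <= R)%nat).

Definition bound (N q j : nat) : R := Rpower (INR q) (/ (INR (ell N q j) ^ 2)).

Definition inP (N q j p : nat) : bool :=
  if prime_dec (Z.of_nat p) then
    if Rle_dec (INR p) (bound N q j) then
      match j with
      | O => false
      | S O => Nat.odd p
      | S j' => if Rlt_dec (bound N q j') (INR p) then true else false
      end
    else false
  else false.

(* P_j(t, chi) = sum_{p in P_j} lambda_f(p) chi(p) p^{-1/2-it} (all such p are <= q) *)
Definition Pj (lf : nat -> C) (N q j : nat) (t : R) (chi : nat -> C) : C :=
  fold_right Cplus 0%C
    (map (fun p => if inP N q j p
                   then (lf p * chi p * npow_neg p (RtoC (1/2) + RtoC t * Ci))%C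
                   else 0%C)
         (seq 0 (S q))).

Definition c_k (k : R) : R := 64 * Rmax 1 k.
Definition r_k (k : R) : nat :=
  if Rlt_dec 1 k then 2%nat else (natceil (1 + / k) + 1)%nat.

Definition Qj (lf : nat -> C) (N M q j : nat) (t : R) (chi : nat -> C) (k : R) : C :=
  if Nat.eqb j (S (Rmax_idx N M q)) then 1%C
  else ((RtoC (c_k k) * Pj lf N q j t chi / RtoC (INR (ell N q j)))
          ^ (r_k k * ell N q j))%C.

Definition Etrunc (l : nat) (x : C) : C :=
  fold_right Cplus 0%C (map (fun j => (x ^ j / RtoC (INR (fact j)))%C) (seq 0 (S l))).

Definition Nj (lf : nat -> C) (N q j : nat) (t : R) (chi : nat -> C) (alpha : R) : C :=
  Etrunc (ell N q j) (RtoC alpha * Pj lf N q j t chi)%C.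

Definition mollsum (lf : nat -> C) (N M q : nat) (t : R) (chi : nat -> C) (alpha k : R) : R :=
  fold_right Rplus 0
    (map (fun v =>
       fold_right Rmult 1 (map (fun j => Cmod (Nj lf N q j t chi alpha) ^ 2) (seq 1 v))
       * Cmod (Qj lf N M q (S v) t chi k) ^ 2)
       (seq 0 (S (Rmax_idx N M q)))).

(* Main.v *)
Require Import Defs.
From Stdlib Require Import Reals.
From Coquelicot Require Import Coquelicot.
From Stdlib Require Import Lra Lia List ZArith Znumtheory Factorial ClassicalEpsilon Classical.
Import ListNotations.
Open Scope R_scope.

Definition lsum {T} (l : list T) (f : T -> R) : R := fold_right Rplus 0 (map f l).

Lemma lsum_le {T} (l : list T) f g : (forall c, In c l -> f c <= g c) -> lsum l f <= lsum l g.
Proof. unfold lsum. induction l as [|a l IH]; simpl; intros H; [lra|]. specialize (IH (fun c Hc => H c (or_intror Hc))).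
  pose proof (H a (or_introl eq_refl)). lra. Qed.

Lemma lsum_nonneg {T} (l : list T) f : (forall c, In c l -> 0 <= f c) -> 0 <= lsum l f.
Proof. intros H. unfold lsum. induction l; simpl; [lra|].
  pose proof (H a (or_introl eq_refl)). pose proof (IHl (fun c Hc => H c (or_intror Hc))). lra.
Qed.

Lemma lsum_lin {T} (l : list T) f g a b :
  lsum l (fun c => a * f c + b * g c) = a * lsum l f + b * lsum l g.
Proof. induction l as [|x l IH]; unfold lsum in *; simpl; [ring|]. rewrite IH. ring. Qed.

Lemma lsum_zero {T} (l : list T) f : (forall c, In c l -> 0 <= f c) -> lsum l f = 0 ->
  forall c, In c l -> f c = 0.
Proof. induction l as [|x l IH]; unfold lsum in *; simpl; intros H0 Hs c Hc; [contradiction|].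
  assert (0 <= fold_right Rplus 0 (map f l)) by (apply (lsum_nonneg l f); auto).
  pose proof (H0 x (or_introl eq_refl)).
  destruct Hc as [<-|Hc]; [lra|]. apply IH; auto; lra. Qed.

Lemma lsum_single {T} (l : list T) f c : (forall c, In c l -> 0 <= f c) -> In c l -> f c <= lsum l f.
Proof. induction l as [|x l IH]; unfold lsum in *; simpl; intros H0 Hc; [contradiction|].
  assert (0 <= fold_right Rplus 0 (map f l)) by (apply (lsum_nonneg l f); auto).
  pose proof (H0 x (or_introl eq_refl)).
  destruct Hc as [<-|Hc]; [lra|]. pose proof (IH (fun c H => H0 c (or_intror H)) Hc). lra. Qed.

Lemma rpow_nonneg x y : 0 <= rpow x y.
Proof. unfold rpow. destruct (Req_EM_T x 0); [lra|]. unfold Rpower. left; apply exp_pos. Qed.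

Lemma rpow_0 y : rpow 0 y = 0.
Proof. unfold rpow. destruct (Req_EM_T 0 0); [auto|congruence]. Qed.

Lemma rpow_pos x y : x <> 0 -> rpow x y = Rpower x y.
Proof. unfold rpow. destruct (Req_EM_T x 0); [congruence|auto]. Qed.

Lemma young a b k : 0 < a -> 0 < b -> 0 < k < 1 ->
  Rpower a k * Rpower b (1 - k) <= k * a + (1 - k) * b.
Proof. intros Ha Hb Hk. unfold Rpower. rewrite <- exp_plus.
  set (A := ln a). set (B := ln b). set (m := k * A + (1-k) * B).
  replace (k * ln a + (1 - k) * ln b) with m by (unfold m, A, B; ring).
  rewrite <- (exp_ln a Ha), <- (exp_ln b Hb). fold A B.
  replace A with (m + (A - m)) by ring. replace B with (m + (B - m)) by ring.
  rewrite !exp_plus.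
  pose proof (exp_ineq1_le (A - m)). pose proof (exp_ineq1_le (B - m)).
  pose proof (exp_pos m).
  assert (0 <= k * exp m * (exp (A - m) - 1 - (A - m))) by (apply Rmult_le_pos; [apply Rmult_le_pos|]; lra).
  assert (0 <= (1-k) * exp m * (exp (B - m) - 1 - (B - m))) by (apply Rmult_le_pos; [apply Rmult_le_pos|]; lra).
  assert (k * (A - m) + (1 - k) * (B - m) = 0) by (unfold m; ring).
  nra.
Qed.

Lemma lsum_0 {T} (l : list T) : lsum l (fun _ => 0) = 0.
Proof. unfold lsum; induction l; simpl; auto. rewrite IHl; ring. Qed.

Lemma holder {T} (l : list T) X Y k : 0 < k < 1 ->
  (forall c, In c l -> 0 <= X c) -> (forall c, In c l -> 0 <= Y c) ->
  lsum l (fun c => rpow (X c) k * rpow (Y c) (1 - k))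
  <= rpow (lsum l X) k * rpow (lsum l Y) (1 - k).
Proof. intros Hk HX HY.
  pose proof (lsum_nonneg l X HX) as SX. pose proof (lsum_nonneg l Y HY) as SY.
  assert (R0 : 0 <= rpow (lsum l X) k * rpow (lsum l Y) (1 - k))
    by (apply Rmult_le_pos; apply rpow_nonneg).
  destruct (Req_EM_T (lsum l X) 0) as [E|NE].
  { apply Rle_trans with (lsum l (fun _ => 0)); [|rewrite lsum_0; auto].
    apply lsum_le. intros c Hc. rewrite (lsum_zero l X HX E c Hc), rpow_0. lra. }
  destruct (Req_EM_T (lsum l Y) 0) as [E|NE'].
  { apply Rle_trans with (lsum l (fun _ => 0)); [|rewrite lsum_0; auto].
    apply lsum_le. intros c Hc. rewrite (lsum_zero l Y HY E c Hc), rpow_0. lra. }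
  set (c0 := rpow (lsum l X) k * rpow (lsum l Y) (1 - k)).
  apply Rle_trans with (lsum l (fun c => (c0 * k / lsum l X) * X c + (c0 * (1-k) / lsum l Y) * Y c)).
  2:{ rewrite lsum_lin. right. field. split; auto. }
  apply lsum_le. intros c Hc.
  pose proof (HX c Hc). pose proof (HY c Hc).
  assert (0 <= c0) by (unfold c0; auto).
  assert (0 <= c0 * k / lsum l X * X c + c0 * (1 - k) / lsum l Y * Y c).
  { apply Rplus_le_le_0_compat; apply Rmult_le_pos; auto; unfold Rdiv;
      apply Rmult_le_pos; try (apply Rmult_le_pos; lra); left; apply Rinv_0_lt_compat; lra. }
  destruct (Req_EM_T (X c) 0) as [E|NX]. { rewrite E in *. rewrite rpow_0. lra. }
  destruct (Req_EM_T (Y c) 0) as [E|NY]. { rewrite E in *. rewrite rpow_0. lra. }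
  unfold c0. rewrite !rpow_pos by auto.
  assert (0 < lsum l X) by lra. assert (0 < lsum l Y) by lra.
  assert (0 < X c) by lra. assert (0 < Y c) by lra.
  replace (X c) with (lsum l X * (X c / lsum l X)) at 1 by (field; lra).
  replace (Y c) with (lsum l Y * (Y c / lsum l Y)) at 1 by (field; lra).
  rewrite <- !Rpower_mult_distr by (try apply Rdiv_lt_0_compat; lra).
  pose proof (young (X c / lsum l X) (Y c / lsum l Y) k ltac:(apply Rdiv_lt_0_compat; lra)
     ltac:(apply Rdiv_lt_0_compat; lra) Hk).
  assert (0 < Rpower (lsum l X) k * Rpower (lsum l Y) (1-k)) by (apply Rmult_lt_0_compat; unfold Rpower; apply exp_pos).
  apply Rle_trans with (Rpower (lsum l X) k * Rpower (lsum l Y) (1-k) *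
     (k * (X c / lsum l X) + (1 - k) * (Y c / lsum l Y))).
  - replace (Rpower (lsum l X) k * Rpower (X c / lsum l X) k *
      (Rpower (lsum l Y) (1 - k) * Rpower (Y c / lsum l Y) (1 - k))) with
      (Rpower (lsum l X) k * Rpower (lsum l Y) (1-k) *
      (Rpower (X c / lsum l X) k * Rpower (Y c / lsum l Y) (1 - k))) by ring.
    apply Rmult_le_compat_l; lra.
  - right. field. split; lra.
Qed.


Lemma IZR_Rceil y : y <= IZR (Rceil y) < y + 1.
Proof. unfold Rceil. destruct (archimed (- y)) as [H1 H2].
  rewrite opp_IZR, minus_IZR. simpl. lra. Qed.

Lemma natceil_ge y : 0 <= y -> y <= INR (natceil y).
Proof. intros Hy. pose proof (IZR_Rceil y). unfold natceil.
  assert (0 <= Rceil y)%Z by (apply le_IZR; lra).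
  rewrite INR_IZR_INZ, Z2Nat.id by auto. lra. Qed.

Lemma natceil_lt y : INR (natceil y) < Rmax 0 y + 1.
Proof. pose proof (IZR_Rceil y). unfold natceil.
  destruct (Z_le_gt_dec 0 (Rceil y)).
  - rewrite INR_IZR_INZ, Z2Nat.id by auto. pose proof (Rmax_r 0 y). lra.
  - replace (Z.to_nat (Rceil y)) with 0%nat by lia. simpl. pose proof (Rmax_l 0 y). lra. Qed.

Lemma ln_lt_self t : 0 < t -> ln t < t.
Proof. intros Ht. pose proof (exp_ineq1_le t). rewrite <- (ln_exp t) at 2.
  apply ln_increasing; lra. Qed.

Lemma ln_bound (N : nat) x : (INR (4 * N + 2)) ^ 2 <= x -> 2 * INR N * ln x + 2 <= x.
Proof. intros Hx. rewrite plus_INR, mult_INR in Hx. simpl in Hx.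
  pose proof (pos_INR N).
  assert (Hx0 : 0 < x) by nra.
  set (t := sqrt x). assert (Ht : t * t = x) by (apply sqrt_sqrt; lra).
  assert (Ht0 : 0 <= t) by apply sqrt_pos.
  assert (4 * INR N + 2 <= t).
  { apply Rsqr_incr_0_var; unfold Rsqr; [|lra]. rewrite Ht. nra. }
  assert (0 < t) by lra.
  rewrite <- Ht, ln_mult by lra. pose proof (ln_lt_self t H1).
  nra. Qed.

Definition gstep (N n : nat) : nat := (2 * natceil (INR N * ln (INR n)))%nat.

Lemma ell_step N q j : ell N q (S (S j)) = gstep N (ell N q (S j)).
Proof. reflexivity. Qed.

Section Seq.
Variable N X : nat.
Hypothesis HX : (INR (4 * N + 2)) ^ 2 <= INR X.

Lemma F2 n : (X < n)%nat -> (gstep N n < n)%nat.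
Proof. intros H. apply INR_lt. unfold gstep. rewrite mult_INR.
  pose proof (natceil_lt (INR N * ln (INR n))).
  assert (1 <= INR n) by (apply (le_INR 1); lia).
  assert (0 <= INR N * ln (INR n)).
  { apply Rmult_le_pos; [apply pos_INR|]. rewrite <- ln_1. apply ln_le; lra. }
  rewrite Rmax_right in H0 by lra.
  assert (INR X <= INR n) by (apply le_INR; lia).
  pose proof (ln_bound N (INR n) ltac:(lra)). simpl. lra. Qed.

Lemma F1 n : (n <= X)%nat -> (gstep N n <= X)%nat.
Proof. intros H. apply INR_le. unfold gstep. rewrite mult_INR.
  pose proof (natceil_lt (INR N * ln (INR n))).
  pose proof (ln_bound N (INR X) HX).
  rewrite plus_INR, mult_INR in HX. simpl in HX. pose proof (pos_INR N).
  destruct n as [|n].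
  - assert (E0 : ln (INR 0) = 0) by (simpl; unfold ln; destruct (Rlt_dec _ _) as [h|h]; [exfalso; lra|reflexivity]).
    rewrite E0, Rmult_0_r in H0 |- *. rewrite Rmax_left in H0 by lra.
    assert (0 <= ln (INR X) * INR N).
    { apply Rmult_le_pos; [|lra]. rewrite <- ln_1. apply ln_le; nra. }
    simpl. nra.
  - assert (1 <= INR (S n)) by (apply (le_INR 1); lia).
    assert (INR (S n) <= INR X) by (apply le_INR; lia).
    assert (0 <= ln (INR (S n))) by (rewrite <- ln_1; apply ln_le; lra).
    assert (ln (INR (S n)) <= ln (INR X)) by (apply ln_le; lra).
    rewrite Rmax_right in H0 by (apply Rmult_le_pos; lra).
    assert (INR N * ln (INR (S n)) <= INR N * ln (INR X)) by (apply Rmult_le_compat_l; lra).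
    replace (INR 2) with 2 by (simpl; lra). lra. Qed.

Variable e : nat -> nat.
Hypothesis He : forall j, e (S (S j)) = gstep N (e (S j)).

Lemma seg j : (1 <= j)%nat -> (X < e (S j))%nat -> (X < e j)%nat.
Proof. intros Hj H. destruct j as [|j]; [lia|]. rewrite He in H.
  destruct (le_lt_dec (e (S j)) X); auto. pose proof (F1 _ l). lia. Qed.

Lemma below d : forall j, (1 <= j)%nat -> (X < e (j + d))%nat ->
  (e (j + d) + d <= e j)%nat /\ (X < e j)%nat.
Proof. induction d as [|d IH]; intros j Hj H.
  - rewrite Nat.add_0_r in H |- *. rewrite Nat.add_0_r. split; lia.
  - replace (j + S d)%nat with (S (j + d)) in * by lia.
    pose proof (seg (j + d) ltac:(lia) H) as H1.
    destruct (IH j Hj H1) as [H2 H3]. split; auto.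
    destruct (j + d)%nat as [|m] eqn:E; [lia|]. rewrite He in *.
    pose proof (F2 _ H1). lia. Qed.

Lemma exists_max (P : nat -> Prop) : P 1%nat ->
  forall n, exists R, (1 <= R)%nat /\ P R /\ forall j, (1 <= j <= n)%nat -> P j -> (j <= R)%nat.
Proof. intros H1. induction n as [|n IH].
  - exists 1%nat. split; [lia|split; [auto|]]. intros; lia.
  - destruct IH as [R [HR1 [HR2 HR3]]].
    destruct (classic (P (S n))) as [HP|HP].
    + destruct (le_lt_dec (S n) R).
      * exists R. split; [lia|split; [auto|]]. intros j Hj Pj. destruct (Nat.eq_dec j (S n)); [lia|]. apply HR3; auto; lia.
      * exists (S n). split; [lia|split; [auto|]]. intros j Hj Pj.
        destruct (Nat.eq_dec j (S n)); [lia|]. pose proof (HR3 j ltac:(lia) Pj). lia.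
    + exists R. split; [lia|split; [auto|]]. intros j Hj Pj. destruct (Nat.eq_dec j (S n)); [subst; contradiction|].
      apply HR3; auto; lia. Qed.

Lemma R_spec_exists : (X < e 1)%nat ->
  exists R, (1 <= R)%nat /\ (e R > X)%nat /\
       forall j, (1 <= j)%nat -> (e j > X)%nat -> (j <= R)%nat.
Proof. intros H1.
  destruct (exists_max (fun j => (X < e j)%nat) H1 (S (e 1%nat))) as [R [A [B C]]].
  exists R. repeat split; auto. intros j Hj Pj. apply C; auto. split; auto.
  destruct (below (j - 1) 1 ltac:(lia) ltac:(replace (1 + (j-1))%nat with j by lia; lia)).
  lia. Qed.

End Seq.


Lemma exp_le' a b : a <= b -> exp a <= exp b.
Proof. intros [H|H]; [left; apply exp_increasing; auto|subst; lra]. Qed.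

Lemma Rabs_le_inv a b : Rabs a <= b -> - b <= a <= b.
Proof. intros H. pose proof (Rle_abs a). pose proof (Rle_abs (- a)). rewrite Rabs_Ropp in H1. lra. Qed.

Lemma fold_seq_sum (f : nat -> R) n :
  fold_right Rplus 0 (map f (seq 0 (S n))) = sum_f_R0 f n.
Proof.
  assert (forall a, fold_right Rplus 0 (map f (seq a (S n))) = sum_f_R0 (fun i => f (a + i)%nat) n).
  { induction n as [|n IH]; intros a.
    - simpl. rewrite Nat.add_0_r. ring.
    - change (fold_right Rplus 0 (map f (seq a (S (S n))))) with
        (f a + fold_right Rplus 0 (map f (seq (S a) (S n)))).
      rewrite IH. rewrite (decomp_sum (fun i => f (a + i)%nat) (S n)) by lia. simpl pred.
      rewrite Nat.add_0_r. f_equal. apply sum_eq. intros; f_equal; lia. }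
  rewrite H. apply sum_eq. intros; f_equal. Qed.

Section Core.
Variables x y : R.

Fixpoint uw (j : nat) : R * R :=
  match j with
  | O => (1, 0)
  | S j' => ((x * fst (uw j') - y * snd (uw j')) / INR (S j'),
             (x * snd (uw j') + y * fst (uw j')) / INR (S j'))
  end.
Definition u j := fst (uw j).
Definition w j := snd (uw j).
Definition r := sqrt (x ^ 2 + y ^ 2).
Definition rho (j : nat) := / INR (fact j) * r ^ j.

Lemma uS j : INR (S j) * u (S j) = x * u j - y * w j.
Proof. unfold u, w. cbn [uw fst]. field. apply not_0_INR; lia. Qed.
Lemma wS j : INR (S j) * w (S j) = x * w j + y * u j.
Proof. unfold u, w. cbn [uw snd]. field. apply not_0_INR; lia. Qed.

Lemma uw_C j : (Cpow (x, y) j / RtoC (INR (fact j)))%C = (u j, w j).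
Proof. induction j as [|j IH].
  - unfold u, w. simpl. apply injective_projections; simpl; field.
  - assert (E : (Cpow (x, y) (S j) / RtoC (INR (fact (S j))))%C =
             ((x, y) * (Cpow (x, y) j / RtoC (INR (fact j))) / RtoC (INR (S j)))%C).
    { rewrite fact_simpl, mult_INR, RtoC_mult. simpl Cpow. field.
      split; intro Hc; apply RtoC_inj in Hc; revert Hc.
      - apply INR_fact_neq_0.
      - apply not_0_INR; lia. }
    rewrite E, IH.
    pose proof (uS j) as H1. pose proof (wS j) as H2.
    assert (INR (S j) <> 0) by (apply not_0_INR; lia).
    set (n := INR (S j)) in *.
    unfold Cdiv, Cinv, Cmult. simpl. apply injective_projections; simpl.
    + apply (Rmult_eq_reg_l n); auto. rewrite H1. field. auto.
    + apply (Rmult_eq_reg_l n); auto. rewrite H2. field. auto.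
Qed.

Lemma r2 : r ^ 2 = x ^ 2 + y ^ 2.
Proof. unfold r. rewrite pow2_sqrt; nra. Qed.
Lemma r_nonneg : 0 <= r.
Proof. apply sqrt_pos. Qed.
Lemma rho_nonneg j : 0 <= rho j.
Proof. unfold rho. apply Rmult_le_pos; [left; apply Rinv_0_lt_compat, INR_fact_lt_0|apply pow_le, r_nonneg]. Qed.

Lemma uw_norm j : u j ^ 2 + w j ^ 2 = rho j ^ 2.
Proof. induction j as [|j IH].
  - unfold u, w, rho. simpl. field.
  - assert (INR (S j) <> 0) by (apply not_0_INR; lia).
    assert (Hu : u (S j) = (x * u j - y * w j) / INR (S j)) by (rewrite <- uS; field; auto).
    assert (Hw : w (S j) = (x * w j + y * u j) / INR (S j)) by (rewrite <- wS; field; auto).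
    assert (Hr : rho (S j) = r * rho j / INR (S j)).
    { unfold rho. rewrite fact_simpl, mult_INR. simpl pow. field. split; auto. apply INR_fact_neq_0. }
    rewrite Hu, Hw, Hr. pose proof r2.
    replace ((r * rho j / INR (S j)) ^ 2) with (r ^ 2 * rho j ^ 2 / INR (S j) ^ 2) by (field; auto).
    rewrite <- IH, H0. field. auto.
Qed.

Lemma u_le j : Rabs (u j) <= rho j.
Proof. pose proof (uw_norm j). pose proof (rho_nonneg j). apply Rabs_le. split; nra. Qed.
Lemma w_le j : Rabs (w j) <= rho j.
Proof. pose proof (uw_norm j). pose proof (rho_nonneg j). apply Rabs_le. split; nra. Qed.

Lemma x_le : Rabs x <= r.
Proof. pose proof r2. pose proof r_nonneg. apply Rabs_le. split; nra. Qed.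
Lemma y_le : Rabs y <= r.
Proof. pose proof r2. pose proof r_nonneg. apply Rabs_le. split; nra. Qed.


Definition gp (a : nat -> R) (l : nat) (s : R) := sum_f_R0 (fun j => a j * s ^ j) l.

Lemma sum_lin2 (f g : nat -> R) a b n :
  sum_f_R0 (fun k => a * f k + b * g k) n = a * sum_f_R0 f n + b * sum_f_R0 g n.
Proof. induction n; simpl; [ring|]. rewrite IHn. ring. Qed.

Lemma gp_abs a l s : Rabs s <= 1 -> Rabs (gp a l s) <= sum_f_R0 (fun j => Rabs (a j)) l.
Proof. intros Hs. unfold gp. induction l as [|l IH].
  - simpl. rewrite Rabs_mult. rewrite Rabs_R1. lra.
  - rewrite !tech5. eapply Rle_trans; [apply Rabs_triang|]. apply Rplus_le_compat; auto.
    rewrite Rabs_mult, <- RPow_abs. pose proof (Rabs_pos (a (S l))).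
    assert (0 <= Rabs s ^ S l) by (apply pow_le, Rabs_pos).
    assert (Rabs s ^ S l <= 1) by (rewrite <- (pow1 (S l)); apply pow_incr; split; [apply Rabs_pos|] ; auto).
    nra.
Qed.

Lemma gp_0 a l : gp a l 0 = a 0%nat.
Proof. unfold gp. induction l; simpl; [ring|]. rewrite IHl. ring. Qed.

Lemma gp_1 a l : gp a l 1 = sum_f_R0 a l.
Proof. unfold gp. apply sum_eq. intros. rewrite pow1. ring. Qed.

Lemma sum_rho_le l : sum_f_R0 rho l <= exp r.
Proof. apply sum_incr.
  - unfold exp. destruct (exist_exp r) as [e He]. simpl. exact He.
  - apply rho_nonneg. Qed.

Lemma term_le_sum (f : nat -> R) l : (forall n, 0 <= f n) -> f l <= sum_f_R0 f l.
Proof. intros Hf. destruct l; simpl; [lra|]. pose proof (cond_pos_sum f l Hf). lra. Qed.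

Lemma rho_le_exp l : rho l <= exp r.
Proof. eapply Rle_trans; [apply term_le_sum, rho_nonneg|apply sum_rho_le]. Qed.


Lemma dgp_u l' s : is_derive (gp u (S l')) s (x * gp u l' s + (- y) * gp w l' s).
Proof. apply is_derive_Reals. unfold gp.
  pose proof (derivable_pt_lim_finite_sum u s (S l')) as D. simpl pred in D.
  replace (x * sum_f_R0 (fun j => u j * s ^ j) l' + - y * sum_f_R0 (fun j => w j * s ^ j) l')
    with (sum_f_R0 (fun k => INR (S k) * u (S k) * s ^ k) l'); auto.
  rewrite <- sum_lin2. apply sum_eq. intros k _. rewrite uS. ring. Qed.

Lemma dgp_w l' s : is_derive (gp w (S l')) s (x * gp w l' s + y * gp u l' s).
Proof. apply is_derive_Reals. unfold gp.
  pose proof (derivable_pt_lim_finite_sum w s (S l')) as D. simpl pred in D.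
  replace (x * sum_f_R0 (fun j => w j * s ^ j) l' + y * sum_f_R0 (fun j => u j * s ^ j) l')
    with (sum_f_R0 (fun k => INR (S k) * w (S k) * s ^ k) l'); auto.
  rewrite <- sum_lin2. apply sum_eq. intros k _. rewrite wS. ring. Qed.


Definition Phi (L : nat) (s : R) := (gp u L s ^ 2 + gp w L s ^ 2) * exp (- 2 * x * s).

Lemma dPhi l' s : is_derive (Phi (S l')) s
  ((INR 2 * (x * gp u l' s + (- y) * gp w l' s) * gp u (S l') s ^ 1 +
    INR 2 * (x * gp w l' s + y * gp u l' s) * gp w (S l') s ^ 1) * exp (- 2 * x * s)
   + (gp u (S l') s ^ 2 + gp w (S l') s ^ 2) * ((- 2 * x) * exp (- 2 * x * s))).
Proof.
  unfold Phi.
  apply (is_derive_mult (fun s => gp u (S l') s ^ 2 + gp w (S l') s ^ 2) (fun s => exp (- 2 * x * s))).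
  - apply (is_derive_plus (fun s => gp u (S l') s ^ 2) (fun s => gp w (S l') s ^ 2));
      apply is_derive_pow; [apply dgp_u|apply dgp_w].
  - apply (is_derive_comp exp (fun s => - 2 * x * s)). apply is_derive_exp.
    pose proof (is_derive_scal (fun t => t) s (-2*x) 1 (is_derive_id s)) as Hd.
    rewrite Rmult_1_r in Hd. exact Hd.
  - intros; apply Rmult_comm.
Qed.


Lemma abs_sum_le l c : 0 <= c <= 1 -> Rabs (gp u l c) <= exp r /\ Rabs (gp w l c) <= exp r.
Proof. intros Hc. assert (Rabs c <= 1) by (rewrite Rabs_pos_eq; lra).
  split; (eapply Rle_trans; [apply gp_abs; auto|]); (eapply Rle_trans; [|apply (sum_rho_le l)]);
  apply sum_Rle; intros; [apply u_le|apply w_le]. Qed.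

Lemma Phi1 l' : Phi (S l') 1 >= 1 - 8 * r * exp (3 * r) * rho (S l').
Proof.
  set (L := S l').
  destruct (MVT_gen (Phi L) 0 1 (fun s =>
  ((INR 2 * (x * gp u l' s + (- y) * gp w l' s) * gp u (S l') s ^ 1 +
    INR 2 * (x * gp w l' s + y * gp u l' s) * gp w (S l') s ^ 1) * exp (- 2 * x * s)
   + (gp u (S l') s ^ 2 + gp w (S l') s ^ 2) * ((- 2 * x) * exp (- 2 * x * s))))) as [c [Hc E]].
  - intros s _. apply dPhi.
  - intros s _. apply continuity_pt_filterlim. apply (ex_derive_continuous (V := R_NormedModule) (Phi L) s). eexists; apply dPhi.
  - rewrite Rmin_left, Rmax_right in Hc by lra.
    assert (P0 : Phi L 0 = 1).
    { unfold Phi. rewrite !gp_0. unfold u, w. simpl. rewrite Rmult_0_r, exp_0. ring. }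
    rewrite P0, Rminus_0_r, Rmult_1_r in E.
    set (G := gp u L c) in *. set (H := gp w L c) in *.
    set (U := u L * c ^ L). set (W := w L * c ^ L).
    assert (HG : gp u l' c = G - U) by (unfold G, U, L, gp; rewrite tech5; ring).
    assert (HH : gp w l' c = H - W) by (unfold H, W, L, gp; rewrite tech5; ring).
    fold L in E. rewrite HG, HH in E.
    set (e := exp (- 2 * x * c)) in *.
    set (K := x * (G * U + H * W) + y * (H * U - G * W)).
    assert (ED : Phi L 1 - 1 = - 2 * e * K) . { change (gp u L c) with G in E; change (gp w L c) with H in E.
      rewrite E; unfold K; simpl INR. ring. }
    destruct (abs_sum_le L c Hc) as [BG BH]. fold G H in BG, BH.
    assert (Rabs c <= 1) by (rewrite Rabs_pos_eq; lra).
    assert (Rabs (c ^ L) <= 1).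
    { rewrite <- RPow_abs, <- (pow1 L). apply pow_incr. split; auto. apply Rabs_pos. }
    assert (BU : Rabs U <= rho L).
    { unfold U. rewrite Rabs_mult. pose proof (u_le L). pose proof (Rabs_pos (u L)).
      pose proof (Rabs_pos (c ^ L)). nra. }
    assert (BW : Rabs W <= rho L).
    { unfold W. rewrite Rabs_mult. pose proof (w_le L). pose proof (Rabs_pos (w L)).
      pose proof (Rabs_pos (c ^ L)). nra. }
    pose proof (rho_nonneg L). pose proof r_nonneg. pose proof x_le. pose proof y_le.
    assert (E1 : Rabs G * Rabs U <= exp r * rho L) by (apply Rmult_le_compat; auto; apply Rabs_pos).
    assert (E2 : Rabs H * Rabs W <= exp r * rho L) by (apply Rmult_le_compat; auto; apply Rabs_pos).
    assert (E3 : Rabs H * Rabs U <= exp r * rho L) by (apply Rmult_le_compat; auto; apply Rabs_pos).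
    assert (E4 : Rabs G * Rabs W <= exp r * rho L) by (apply Rmult_le_compat; auto; apply Rabs_pos).
    assert (BK : Rabs K <= 4 * r * exp r * rho L).
    { unfold K. eapply Rle_trans; [apply Rabs_triang|].
      rewrite !Rabs_mult.
      assert (Rabs (G * U + H * W) <= 2 * exp r * rho L).
      { eapply Rle_trans; [apply Rabs_triang|]. rewrite !Rabs_mult. lra. }
      assert (Rabs (H * U - G * W) <= 2 * exp r * rho L).
      { eapply Rle_trans; [apply Rabs_triang|]. rewrite Rabs_Ropp, !Rabs_mult. lra. }
      pose proof (Rabs_pos x). pose proof (Rabs_pos y).
      pose proof (Rabs_pos (G * U + H * W)). pose proof (Rabs_pos (H * U - G * W)).
      assert (Rabs x * Rabs (G * U + H * W) <= r * (2 * exp r * rho L)) by (apply Rmult_le_compat; auto).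
      assert (Rabs y * Rabs (H * U - G * W) <= r * (2 * exp r * rho L)) by (apply Rmult_le_compat; auto).
      lra. }
    assert (Be : e <= exp (2 * r)).
    { unfold e. apply exp_le'. pose proof x_le as Hx. apply Rabs_le_inv in Hx. nra. }
    assert (0 < e) by apply exp_pos.
    assert (FB : Rabs (Phi L 1 - 1) <= 8 * r * exp (3 * r) * rho L).
    { assert (A2 : Rabs (-2) = 2) by (rewrite Rabs_left; lra). rewrite ED, !Rabs_mult, A2, (Rabs_pos_eq e) by lra.
      replace (3 * r) with (2 * r + r) by ring. rewrite exp_plus.
      pose proof (Rabs_pos K).
      assert (e * Rabs K <= exp (2 * r) * (4 * r * exp r * rho L)) by (apply Rmult_le_compat; lra).
      lra. }
    apply Rabs_le_inv in FB. lra.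
Qed.


Lemma Etrunc_eq l : Etrunc l (x, y) = (sum_f_R0 u l, sum_f_R0 w l).
Proof.
  unfold Etrunc. rewrite (map_ext _ (fun j => (u j, w j))) by (intros; apply uw_C).
  rewrite <- !fold_seq_sum. generalize (seq 0 (S l)). intros s0. induction s0; simpl; auto.
  rewrite IHs0. reflexivity. Qed.

Lemma Cmod_Etrunc l : Cmod (Etrunc l (x, y)) ^ 2 = gp u l 1 ^ 2 + gp w l 1 ^ 2.
Proof. rewrite Etrunc_eq, !gp_1. unfold Cmod. simpl fst; simpl snd.
  rewrite pow2_sqrt; auto. nra. Qed.

End Core.

Lemma exp_INR n : exp (INR n) = exp 1 ^ n.
Proof. induction n; [simpl; apply exp_0|]. rewrite S_INR, exp_plus, IHn. simpl. ring. Qed.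

Lemma INR_le_pow2 n : INR n <= 2 ^ n.
Proof. induction n; [simpl; lra|]. rewrite S_INR. simpl. pose proof (pow_R1_Rle 2 n ltac:(lra)). lra. Qed.

Lemma fact_bound L : / INR (fact L) * INR L ^ L <= exp (INR L).
Proof. eapply Rle_trans; [apply (term_le_sum (fun j => / INR (fact j) * INR L ^ j))|].
  - intros n. apply Rmult_le_pos; [left; apply Rinv_0_lt_compat, INR_fact_lt_0|apply pow_le, pos_INR].
  - apply sum_incr. + unfold exp. destruct (exist_exp (INR L)) as [e He]. simpl. exact He.
    + intros n. apply Rmult_le_pos; [left; apply Rinv_0_lt_compat, INR_fact_lt_0|apply pow_le, pos_INR].
Qed.

Lemma delta_bound (r0 : R) (L : nat) : 0 <= r0 -> 64 * r0 <= INR L ->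
  8 * r0 * exp (3 * r0) * (/ INR (fact L) * r0 ^ L) <= (1/2) ^ L.
Proof. intros Hr HL.
  assert (HfL : 0 < / INR (fact L)) by (apply Rinv_0_lt_compat, INR_fact_lt_0).
  assert (T1 : r0 ^ L <= INR L ^ L * (/ 64) ^ L).
  { rewrite <- Rpow_mult_distr. apply pow_incr. lra. }
  assert (T2 : / INR (fact L) * r0 ^ L <= exp (INR L) * (/ 64) ^ L).
  { eapply Rle_trans. apply Rmult_le_compat_l; [lra|apply T1].
    rewrite <- Rmult_assoc. apply Rmult_le_compat_r; [apply pow_le; lra|apply fact_bound]. }
  assert (T3 : exp (3 * r0) <= exp (INR L)) by (apply exp_le'; lra).
  assert (0 <= / INR (fact L) * r0 ^ L) by (apply Rmult_le_pos; [lra|apply pow_le; lra]).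
  assert (0 < exp (3 * r0)) by apply exp_pos.
  assert (T4 : 8 * r0 * exp (3 * r0) * (/ INR (fact L) * r0 ^ L) <=
               8 * (INR L / 64) * exp (INR L) * (exp (INR L) * (/ 64) ^ L)).
  { apply Rmult_le_compat; try lra.
    - apply Rmult_le_pos; lra.
    - apply Rmult_le_compat; lra. }
  eapply Rle_trans; [apply T4|].
  rewrite exp_INR.
  replace (8 * (INR L / 64) * exp 1 ^ L * (exp 1 ^ L * (/ 64) ^ L)) with
    (INR L / 8 * (exp 1 * exp 1 * / 64) ^ L) by (rewrite !Rpow_mult_distr; field).
  pose proof exp_le_3. pose proof (exp_pos 1).
  assert (T5 : (exp 1 * exp 1 * / 64) ^ L <= (1/4) ^ L).
  { apply pow_incr. split; [apply Rmult_le_pos; [nra|lra]|nra]. }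
  replace ((1/4) ^ L) with ((1/2) ^ L * (1/2) ^ L) in T5 by (rewrite <- Rpow_mult_distr; f_equal; field).
  pose proof (INR_le_pow2 L). pose proof (pos_INR L).
  assert (0 < (1/2) ^ L) by (apply pow_lt; lra).
  assert (INR L * (1/2) ^ L <= 1).
  { assert (E2 : 2 ^ L * (1/2) ^ L = 1) by (rewrite <- Rpow_mult_distr; replace (2 * (1/2)) with 1 by field; apply pow1).
    apply Rle_trans with (2 ^ L * (1/2) ^ L); [apply Rmult_le_compat_r; lra|lra]. }
  assert (INR L / 8 * (exp 1 * exp 1 * / 64) ^ L <= INR L / 8 * ((1/2) ^ L * (1/2) ^ L)).
  { apply Rmult_le_compat_l; [lra|auto]. }
  nra.
Qed.

Lemma core_bound (z : C) (L : nat) : (1 <= L)%nat -> 64 * Cmod z <= INR L ->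
  exp (2 * Re z) * (1 - (1/2) ^ L) <= Cmod (Etrunc L z) ^ 2.
Proof. intros HL Hz. destruct z as [x0 y0]. destruct L as [|l']; [lia|].
  assert (Er : Cmod (x0, y0) = r x0 y0) by reflexivity. rewrite Er in Hz.
  pose proof (Phi1 x0 y0 l') as P. unfold Phi in P. rewrite <- Cmod_Etrunc in P.
  pose proof (delta_bound (r x0 y0) (S l') (r_nonneg x0 y0) Hz) as D. unfold rho in P.
  simpl Re. set (C2 := Cmod (Etrunc (S l') (x0, y0)) ^ 2) in *.
  assert (E1 : exp (- 2 * x0 * 1) * exp (2 * x0) = 1) by (rewrite <- exp_plus; replace (- 2 * x0 * 1 + 2 * x0) with 0 by ring; apply exp_0).
  assert (0 < exp (2 * x0)) by apply exp_pos.
  assert (C2 * exp (- 2 * x0 * 1) >= 1 - (1/2) ^ S l') by lra.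
  replace C2 with (C2 * exp (- 2 * x0 * 1) * exp (2 * x0)) by (rewrite Rmult_assoc, E1; ring).
  rewrite (Rmult_comm (exp (2 * x0))). apply Rmult_le_compat_r; lra.
Qed.


Lemma pointwise k CL A B S D : 0 < k < 1 -> 0 <= CL -> 1/2 <= D ->
  exp (2 * (k - 1) * S) * D <= A -> exp (2 * k * S) * D <= B ->
  rpow CL (2 * k) <= 2 * (rpow (CL ^ 2 * A) k * rpow B (1 - k)).
Proof. intros Hk HC HD HA HB.
  pose proof (exp_pos (2 * (k - 1) * S)). pose proof (exp_pos (2 * k * S)).
  assert (0 < exp (2 * (k - 1) * S) * D) by (apply Rmult_lt_0_compat; lra).
  assert (0 < exp (2 * k * S) * D) by (apply Rmult_lt_0_compat; lra).
  destruct (Req_EM_T CL 0) as [E|NE].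
  { rewrite E, rpow_0. apply Rmult_le_pos; [lra|]. apply Rmult_le_pos; apply rpow_nonneg. }
  assert (HC' : 0 < CL) by lra.
  assert (0 < CL ^ 2 * A) by (apply Rmult_lt_0_compat; [apply pow_lt|]; lra).
  rewrite !rpow_pos by lra.
  rewrite <- Rpower_mult_distr by (try apply pow_lt; lra).
  replace (CL ^ 2) with (Rpower CL (INR 2)) by (apply Rpower_pow; lra).
  rewrite Rpower_mult. replace (INR 2 * k) with (2 * k) by (simpl; ring).
  assert (K1 : Rpower (exp (2 * (k - 1) * S) * D) k <= Rpower A k) by (apply Rle_Rpower_l; lra).
  assert (K2 : Rpower (exp (2 * k * S) * D) (1 - k) <= Rpower B (1 - k)) by (apply Rle_Rpower_l; lra).
  assert (K3 : Rpower (exp (2 * (k - 1) * S) * D) k * Rpower (exp (2 * k * S) * D) (1 - k) = D).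
  { unfold Rpower. rewrite <- exp_plus. rewrite !ln_mult by lra. rewrite !ln_exp.
    replace (k * (2 * (k - 1) * S + ln D) + (1 - k) * (2 * k * S + ln D)) with (ln D) by ring.
    apply exp_ln. lra. }
  assert (0 < Rpower CL (2 * k)) by (unfold Rpower; apply exp_pos).
  assert (0 < Rpower (exp (2 * (k - 1) * S) * D) k) by (unfold Rpower; apply exp_pos).
  assert (0 < Rpower (exp (2 * k * S) * D) (1 - k)) by (unfold Rpower; apply exp_pos).
  assert (D <= Rpower A k * Rpower B (1 - k)).
  { rewrite <- K3. apply Rmult_le_compat; lra. }
  nra.
Qed.

Lemma prod_lb {T} (l : list T) (a c d : T -> R) :
  (forall j, In j l -> exp (c j) * d j <= a j) -> (forall j, In j l -> 0 <= d j) ->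
  exp (lsum l c) * fold_right Rmult 1 (map d l) <= fold_right Rmult 1 (map a l).
Proof. induction l as [|j l IH]; intros H1 H2; unfold lsum in *; simpl.
  - rewrite exp_0. lra.
  - rewrite exp_plus.
    assert (0 <= exp (fold_right Rplus 0 (map c l)) * fold_right Rmult 1 (map d l)).
    { apply Rmult_le_pos; [left; apply exp_pos|].
      clear IH H1. induction l; simpl; [lra|]. apply Rmult_le_pos; [apply H2; simpl; auto|].
      apply IHl. intros; apply H2; simpl in *; tauto. }
    pose proof (IH (fun j H => H1 j (or_intror H)) (fun j H => H2 j (or_intror H))).
    pose proof (H1 j (or_introl eq_refl)). pose proof (H2 j (or_introl eq_refl)).
    pose proof (exp_pos (c j)).
    replace (exp (c j) * exp (fold_right Rplus 0 (map c l)) * (d j * fold_right Rmult 1 (map d l)))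
      with ((exp (c j) * d j) * (exp (fold_right Rplus 0 (map c l)) * fold_right Rmult 1 (map d l))) by ring.
    apply Rmult_le_compat; auto. apply Rmult_le_pos; lra.
Qed.

Lemma prod_nonneg {T} (l : list T) (a : T -> R) : (forall j, 0 <= a j) -> 0 <= fold_right Rmult 1 (map a l).
Proof. intros H. induction l; simpl; [lra|]. apply Rmult_le_pos; auto. Qed.

Lemma half_pow_le n m : (n <= m)%nat -> (1/2) ^ m <= (1/2) ^ n.
Proof. intros H. replace m with (n + (m - n))%nat by lia. rewrite pow_add.
  pose proof (pow_le (1/2) n ltac:(lra)). pose proof (pow_le (1/2) (m - n) ltac:(lra)).
  assert ((1/2)^(m-n) <= 1) by (pose proof (pow_incr (1/2) 1 (m-n) ltac:(lra)) as Q; rewrite pow1 in Q; exact Q).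
  rewrite <- (Rmult_1_r ((1/2)^n)) at 2. apply Rmult_le_compat_l; lra. Qed.

Lemma dprod (el : nat -> nat) v : forall a,
  (forall i, (a <= i < a + v)%nat -> (a + v - i + 1 <= el i)%nat) ->
  1/2 + (1/2) ^ (v + 1) <= fold_right Rmult 1 (map (fun i => 1 - (1/2) ^ (el i)) (seq a v)).
Proof. induction v as [|v IH]; intros a H.
  - simpl. lra.
  - simpl seq. simpl map. simpl fold_right.
    pose proof (IH (S a) ltac:(intros i Hi; specialize (H i ltac:(lia)); lia)) as IH'.
    specialize (H a ltac:(lia)).
    assert ((1/2) ^ el a <= (1/2) ^ (S v + 1)).
    { apply half_pow_le; lia. }
    assert ((1/2) ^ (S (v + 1)) = (1/2) ^ (v+1) * (1/2)) by (simpl; ring).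
    replace (S v + 1)%nat with (S (v + 1)) in * by lia.
    assert (0 < (1/2) ^ (v + 1)) by (apply pow_lt; lra).
    assert ((1/2) ^ (v+1) <= 1/2).
    { replace (v + 1)%nat with (S v) by lia. simpl. pose proof (pow_le (1/2) v ltac:(lra)).
      assert ((1/2)^v <= 1) by (pose proof (pow_incr (1/2) 1 v ltac:(lra)) as Q; rewrite pow1 in Q; exact Q). lra. }
    rewrite H1 in *. set (p := (1/2)^(v+1)) in *. set (q := (1/2) ^ el a) in *.
    set (P := fold_right Rmult 1 (map (fun i : nat => 1 - (1 / 2) ^ el i) (seq (S a) v))) in *.
    assert (0 <= q) by (apply pow_le; lra).
    assert ((1 - p * (1/2)) * (1/2 + p) <= (1 - q) * P) by (apply Rmult_le_compat; lra).
    nra.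
Qed.

Lemma exists_min (P : nat -> Prop) : (exists n, P n) -> exists n, P n /\ forall m, (m < n)%nat -> ~ P m.
Proof. intros [n Hn]. apply NNPP. intros Hno.
  assert (forall n, forall m, (m <= n)%nat -> ~ P m).
  { induction n0 as [|n0 IH]; intros m Hm Pm.
    - apply Hno. exists m. split; auto. intros m' Hm'. lia.
    - destruct (Nat.eq_dec m (S n0)).
      + subst. apply Hno. exists (S n0). split; auto. intros m' Hm'. apply IH. lia.
      + apply (IH m); auto; lia. }
  apply (H n n); auto. Qed.

Lemma choose_v (R : nat) (big : nat -> Prop) : exists v, (v <= R)%nat /\
  (forall i, (1 <= i <= v)%nat -> ~ big i) /\ (v = R \/ ((v < R)%nat /\ big (S v))).
Proof.
  destruct (classic (exists j, (1 <= j <= R)%nat /\ big j)) as [Hex|Hno].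
  - destruct (exists_min _ Hex) as [j0 [[Hj0 Bj0] Hmin]].
    exists (j0 - 1)%nat. split; [lia|]. split.
    + intros i Hi Bi. apply (Hmin i); [lia|]. split; auto; lia.
    + right. replace (S (j0 - 1)) with j0 by lia. split; auto; lia.
  - exists R. split; [lia|]. split; [|left; auto].
    intros i Hi Bi. apply Hno. exists i. auto. Qed.

Lemma lsum_scal {T} (l : list T) f a : lsum l (fun c => a * f c) = a * lsum l f.
Proof. induction l; unfold lsum in *; simpl; [ring|]. rewrite IHl. ring. Qed.

Lemma mollsum_lb lf N M q t chi k alpha v D Sm :
  0 < k < 1 -> -1 <= alpha <= 1 ->
  (v <= Rmax_idx N M q)%nat ->
  (forall i, (1 <= i <= v)%nat -> 64 * Cmod (Pj lf N q i t chi) < INR (ell N q i)) ->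
  (forall i, (1 <= i <= v)%nat -> (1 <= ell N q i)%nat) ->
  1 <= Cmod (Qj lf N M q (S v) t chi k) ->
  Sm = lsum (seq 1 v) (fun j => Re (Pj lf N q j t chi)) ->
  D = fold_right Rmult 1 (map (fun i => 1 - (1/2) ^ (ell N q i)) (seq 1 v)) ->
  exp (2 * alpha * Sm) * D <= mollsum lf N M q t chi alpha k.
Proof. intros Hk Ha Hv Hsmall Hl1 HQ HS HD.
  unfold mollsum.
  set (F := fun v0 : nat =>
        fold_right Rmult 1 (map (fun j : nat => Cmod (Nj lf N q j t chi alpha) ^ 2) (seq 1 v0)) *
        Cmod (Qj lf N M q (S v0) t chi k) ^ 2).
  change (fold_right Rplus 0 (map F (seq 0 (S (Rmax_idx N M q))))) with (lsum (seq 0 (S (Rmax_idx N M q))) F).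
  assert (HF : forall v0, 0 <= F v0).
  { intros v0. unfold F. apply Rmult_le_pos; [apply prod_nonneg; intros; apply pow2_ge_0|apply pow2_ge_0]. }
  eapply Rle_trans; [|apply (lsum_single _ F v); [intros; apply HF|apply in_seq; lia]].
  unfold F.
  assert (1 <= Cmod (Qj lf N M q (S v) t chi k) ^ 2) by nra.
  assert (Hp : exp (2 * alpha * Sm) * D <=
    fold_right Rmult 1 (map (fun j : nat => Cmod (Nj lf N q j t chi alpha) ^ 2) (seq 1 v))).
  { rewrite HS, HD, <- lsum_scal.
    apply prod_lb.
    - intros j Hj. apply in_seq in Hj.
      unfold Nj. replace (2 * alpha * Re (Pj lf N q j t chi)) with (2 * Re (RtoC alpha * Pj lf N q j t chi)%C)
        by (simpl; ring).
      apply core_bound; [apply Hl1; lia|].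
      rewrite Cmod_mult, Cmod_R. pose proof (Hsmall j ltac:(lia)). pose proof (Cmod_ge_0 (Pj lf N q j t chi)).
      assert (Rabs alpha <= 1) by (apply Rabs_le; lra). pose proof (Rabs_pos alpha). nra.
    - intros j Hj. apply in_seq in Hj. pose proof (half_pow_le 0 (ell N q j) ltac:(lia)). simpl in H0. lra. }
  assert (0 <= exp (2 * alpha * Sm) * D).
  { apply Rmult_le_pos; [left; apply exp_pos|]. rewrite HD. apply prod_nonneg.
    intros i. pose proof (half_pow_le 0 (ell N q i) ltac:(lia)). simpl in H0. lra. }
  nra.
Qed.

Lemma c_k_val k : k < 1 -> c_k k = 64.
Proof. intros. unfold c_k. rewrite Rmax_left by lra. ring. Qed.

Lemma Q_ge1 lf N M q t chi k v : k < 1 ->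
  (v = Rmax_idx N M q \/ ((v < Rmax_idx N M q)%nat /\ (1 <= ell N q (S v))%nat /\
      INR (ell N q (S v)) <= 64 * Cmod (Pj lf N q (S v) t chi))) ->
  1 <= Cmod (Qj lf N M q (S v) t chi k).
Proof. intros Hk [E|[Hv [Hl Hb]]]; unfold Qj.
  - rewrite E, Nat.eqb_refl, Cmod_1. lra.
  - assert (Nat.eqb (S v) (S (Rmax_idx N M q)) = false) by (apply Nat.eqb_neq; lia).
    rewrite H, Cmod_pow. apply pow_R1_Rle.
    assert (0 < INR (ell N q (S v))) by (apply lt_0_INR; lia).
    assert (RtoC (INR (ell N q (S v))) <> 0%C) by (intro Hc; apply RtoC_inj in Hc; lra).
    rewrite Cmod_div by auto. rewrite Cmod_mult, !Cmod_R, c_k_val by auto.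
    rewrite (Rabs_pos_eq 64) by lra. rewrite (Rabs_pos_eq (INR _)) by lra.
    apply (Rmult_le_reg_r (INR (ell N q (S v)))); auto. unfold Rdiv. rewrite Rmult_assoc, Rinv_l by lra. lra.
Qed.

Theorem lemma4p3 :
  forall (kappa : nat) (f : C -> C) (a : nat -> C),
  is_normalized_hecke_eigenform kappa f a ->
  forall k : R, 0 < k < 1 ->
  exists N0 : nat, forall N : nat, (N0 <= N)%nat ->
  exists M0 : nat, forall M : nat, (M0 <= M)%nat ->
  exists Cst : R, 0 < Cst /\
  forall t : R,
  exists q0 : nat, forall q : nat, (q0 <= q)%nat -> Nat.modulo q 4 <> 2%nat ->
    let lf := lam kappa a in
    let L := fun chi => Lfun lf chi (RtoC (1/2) + RtoC t * Ci)%C in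
    sum_prim q (fun chi => rpow (Cmod (L chi)) (2 * k))
    <= Cst *
       rpow (sum_prim q (fun chi => Cmod (L chi) ^ 2 * mollsum lf N M q t chi (k - 1) k)) k *
       rpow (sum_prim q (fun chi => mollsum lf N M q t chi k k)) (1 - k).
Proof.
  intros kappa f a _ k Hk. exists 1%nat. intros N HN.
  exists ((4 * N + 2) ^ 2)%nat. intros M HM. exists 2. split; [lra|]. intros t.
  assert (HXn : ((4 * N + 2) ^ 2 <= 10 ^ M)%nat).
  { pose proof (Nat.pow_gt_lin_r 10 M ltac:(lia)). lia. }
  assert (HX : INR (4 * N + 2) ^ 2 <= INR (10 ^ M)) by (rewrite <- pow_INR; apply le_INR; auto).
  assert (HX1 : (4 <= 10 ^ M)%nat) by (simpl in HXn; nia).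
  set (X := (10 ^ M)%nat) in *.
  exists (S (natceil (exp (exp (INR X))))). intros q Hq _ lf L.
  assert (H1 : (X < ell N q 1)%nat).
  { change (ell N q 1) with (2 * natceil (INR N * ln (ln (INR q))))%nat.
    pose proof (natceil_ge (exp (exp (INR X))) ltac:(left; apply exp_pos)).
    apply le_INR in Hq. rewrite S_INR in Hq.
    assert (Hq' : exp (exp (INR X)) < INR q) by lra.
    assert (exp (INR X) < ln (INR q)).
    { rewrite <- (ln_exp (exp (INR X))). apply ln_increasing; auto. apply exp_pos. }
    assert (INR X < ln (ln (INR q))).
    { rewrite <- (ln_exp (INR X)). apply ln_increasing; auto. apply exp_pos. }
    assert (1 <= INR N) by (apply (le_INR 1); lia).
    assert (0 <= INR X) by apply pos_INR.
    assert (INR N * ln (ln (INR q)) >= ln (ln (INR q))) by nra.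
    pose proof (natceil_ge (INR N * ln (ln (INR q))) ltac:(lra)).
    apply INR_lt. rewrite mult_INR. simpl (INR 2). lra. }
  set (e := ell N q) in *.
  assert (He : forall j, e (S (S j)) = gstep N (e (S j))) by (intros; apply ell_step).
  assert (Hspec : (1 <= Rmax_idx N M q)%nat /\ (ell N q (Rmax_idx N M q) > 10 ^ M)%nat /\
       forall j, (1 <= j)%nat -> (ell N q j > 10 ^ M)%nat -> (j <= Rmax_idx N M q)%nat).
  { unfold Rmax_idx. apply epsilon_spec. apply (R_spec_exists N X HX e He H1). }
  set (R := Rmax_idx N M q) in *. fold e X in Hspec.
  destruct Hspec as [HR1 [HR2 _]].
  assert (Hl : forall i, (1 <= i <= R)%nat -> (R - i + 2 <= e i)%nat /\ (1 <= e i)%nat).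
  { intros i Hi. destruct (below N X HX e He (R - i) i ltac:(lia) ltac:(replace (i + (R - i))%nat with R by lia; lia)) as [B1 B2].
    replace (i + (R - i))%nat with R in B1 by lia. split; lia. }
  assert (Hpt : forall chi, rpow (Cmod (L chi)) (2 * k) <=
     2 * (rpow (Cmod (L chi) ^ 2 * mollsum lf N M q t chi (k - 1) k) k *
          rpow (mollsum lf N M q t chi k k) (1 - k))).
  { intros chi.
    destruct (choose_v R (fun j => INR (ell N q j) <= 64 * Cmod (Pj lf N q j t chi))) as [v [Hv [Hsm Hcase]]].
    set (Sm := lsum (seq 1 v) (fun j => Re (Pj lf N q j t chi))).
    set (D := fold_right Rmult 1 (map (fun i => 1 - (1/2) ^ (ell N q i)) (seq 1 v))).
    assert (Hsm' : forall i, (1 <= i <= v)%nat -> 64 * Cmod (Pj lf N q i t chi) < INR (ell N q i)).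
    { intros i Hi. apply Rnot_le_lt. apply Hsm; auto. }
    assert (Hl1 : forall i, (1 <= i <= v)%nat -> (1 <= ell N q i)%nat) by (intros i Hi; apply (Hl i); lia).
    assert (HQ : 1 <= Cmod (Qj lf N M q (S v) t chi k)).
    { apply Q_ge1; [lra|]. destruct Hcase as [E|[E1 E2]]; [left; auto|right].
      split; auto. split; auto. apply (Hl (S v)); lia. }
    assert (HD : 1/2 <= D).
    { unfold D. pose proof (dprod (ell N q) v 1%nat) as Dp.
      assert (1/2 <= 1/2 + (1/2) ^ (v + 1)) by (pose proof (pow_le (1/2) (v+1) ltac:(lra)); lra).
      eapply Rle_trans; [apply H|apply Dp]. intros i Hi. destruct (Hl i ltac:(lia)). fold e. lia. }
    apply (pointwise k (Cmod (L chi)) _ _ Sm D Hk (Cmod_ge_0 _) HD).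
    - apply (mollsum_lb lf N M q t chi k (k - 1) v D Sm); auto; lra.
    - apply (mollsum_lb lf N M q t chi k k v D Sm); auto; lra. }
  unfold sum_prim.
  change (fold_right Rplus 0 (map ?F (prim_chars q))) with (lsum (prim_chars q) F).
  eapply Rle_trans; [apply (lsum_le _ _ _ (fun chi _ => Hpt chi))|].
  rewrite lsum_scal, Rmult_assoc. apply Rmult_le_compat_l; [lra|].
  apply holder; auto.
  - intros c _. apply Rmult_le_pos; [apply pow2_ge_0|].
    unfold mollsum. apply lsum_nonneg. intros v _. apply Rmult_le_pos; [apply prod_nonneg; intros; apply pow2_ge_0|apply pow2_ge_0].
  - intros c _. unfold mollsum. apply lsum_nonneg. intros v _. apply Rmult_le_pos; [apply prod_nonneg; intros; apply pow2_ge_0|apply pow2_ge_0].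
Qed.
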